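(* Consider feature importance schemes, i.e. rules $I$ that assign to every finite feature set $F$ and every evaluation function $\nu$ on $F$ a function $I_\nu : F \to \mathbb{R}_{\ge 0}$. Consider the following three properties of a scheme $I$: 1. (Marginal contribution) For every $F$, every evaluation function $\nu$ on $F$ and every $f\in F$: $I_\nu(f) \ge \nu(F) - \nu(F\setminus\{f\})$. 2. (Elimination) For every $F$, every evaluation function $\nu$ on $F$, every $T\subseteq F$, and every $f \in F\setminus T$: $I_\nu(f) \ge I_{\nu'}(f)$, where $(F',\nu')$ is the result of eliminating $T$ from $(F,\nu)$. 3. (Minimalism) For every scheme $J$ satisfying properties 1 and 2, and for every $F$, every evaluation function $\nu$ on $F$ and every $f\in F$: $I_\nu(f) \le J_\nu(f)$. Then the scheme $$I_\nu(f) = \max_{S \subseteq F} \Delta(f,S,\nu)$$ satisfies properties 1, 2 and 3, and it is the only scheme satisfying all three properties.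
   Context: A feature set $F$ is a finite set. An evaluation function on $F$ is a function $\nu : 2^F \to \mathbb{R}_{\ge 0}$ assigning a value to each subset of $F$, with $\nu(\emptyset)=0$. For $f\in F$ and $S\subseteq F$, the marginal gain is $\Delta(f,S,\nu) = \nu(S\cup\{f\}) - \nu(S)$. Eliminating a set $T\subseteq F$ from $(F,\nu)$ produces the feature set $F' = F\setminus T$ and the evaluation function $\nu'$ on $F'$ defined by $\nu'(S) = \nu(S)$ for all $S\subseteq F'$. The function $I_\nu(f)=\max_{S\subseteq F}\Delta(f,S,\nu)$ is called the Marginal Contribution Feature Importance (MCI). *)

(* Defs.v *)
From mathcomp Require Import all_boot all_order all_algebra.
Unset Printing Implicit Defensive.
Import Order.TTheory GRing.Theory Num.Theory.
Local Open Scope ring_scope.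

Section MCI.
Variable R : realFieldType.

(* A finite feature set F is modelled as a finite type T (F = all of T);
   an evaluation function is a map on subsets {set T} -> R that is
   nonnegative and vanishes on the empty set. *)
Definition is_eval (T : finType) (nu : {set T} -> R) : Prop :=
  nu set0 = 0 /\ forall S : {set T}, 0 <= nu S.

Definition Delta (T : finType) (f : T) (S : {set T}) (nu : {set T} -> R) : R :=
  nu (f |: S) - nu S.

Definition Scheme := forall T : finType, ({set T} -> R) -> T -> R.

Definition is_scheme (I : Scheme) : Prop :=
  forall (T : finType) (nu : {set T} -> R), is_eval T nu ->
    forall f : T, 0 <= I T nu f.

Definition elim_set (T : finType) (A : {set T}) : finType :=
  {x : T | x \notin A}.

Definition elim_eval (T : finType) (A : {set T}) (nu : {set T} -> R)
  : {set elim_set T A} -> R :=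
  fun S => nu [set val x | x in S].

Definition marginal_prop (I : Scheme) : Prop :=
  forall (T : finType) (nu : {set T} -> R), is_eval T nu ->
    forall f : T, nu [set: T] - nu ([set: T] :\ f) <= I T nu f.

Definition elimination_prop (I : Scheme) : Prop :=
  forall (T : finType) (nu : {set T} -> R), is_eval T nu ->
    forall (A : {set T}) (f : elim_set T A),
      I (elim_set T A) (@elim_eval T A nu) f <= I T nu (val f).

Definition minimal_prop (I : Scheme) : Prop :=
  forall J : Scheme, is_scheme J -> marginal_prop J -> elimination_prop J ->
    forall (T : finType) (nu : {set T} -> R), is_eval T nu ->
      forall f : T, I T nu f <= J T nu f.

(* Marginal Contribution Feature Importance: max over S of Delta(f,S,nu).
   (The fold starts from 0; this is harmless since Delta(f,S,nu) = 0 for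
   any S containing f, so the maximum is >= 0 anyway.) *)
Definition MCI : Scheme :=
  fun T nu f => \big[Num.max/0]_(S : {set T}) Delta T f S nu.

End MCI.

(* Main.v *)
Require Import Defs.
From mathcomp Require Import all_boot all_order all_algebra.
Import Order.TTheory GRing.Theory Num.Theory.
Local Open Scope ring_scope.

Section Aux.
Variable R : realFieldType.

Lemma mf_ge0 (I : finType) (F : I -> R) : 0 <= \big[Num.max/0]_(i : I) F i.
Proof. by elim/big_rec: _ => // i x _ h; rewrite le_max h orbT. Qed.

Lemma mf_ge (I : finType) (F : I -> R) j : F j <= \big[Num.max/0]_(i : I) F i.
Proof. by rewrite (bigD1 j) //= le_max lexx. Qed.

Lemma mf_le (I : finType) (F : I -> R) c :
  0 <= c -> (forall i, F i <= c) -> \big[Num.max/0]_(i : I) F i <= c.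
Proof.
move=> h0 h; elim/big_rec: _ => // i x _ hx.
by rewrite ge_max h hx.
Qed.

Lemma imset_full (T : finType) (A : {set T}) :
  [set val x | x in [set: elim_set T A]] = ~: A.
Proof.
apply/setP=> x; rewrite inE; apply/imsetP/idP => [[y _ ->]|hx].
  exact: (valP y).
by exists (exist _ x hx : elim_set T A).
Qed.

Lemma imset_minus (T : finType) (A : {set T}) (y : elim_set T A) :
  [set val x | x in [set: elim_set T A] :\ y] = ~: A :\ val y.
Proof.
apply/setP=> x; rewrite !inE; apply/imsetP/andP => [[z]|[hx1 hx2]].
  rewrite !inE andbT => hz ->; split; last exact: (valP z).
  by apply: contra hz => /eqP h; apply/eqP/val_inj.
exists (exist _ x hx2 : elim_set T A); last by [].
rewrite !inE andbT; apply: contra hx1 => /eqP <-; by [].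
Qed.

End Aux.

Theorem theorem1 (R : realFieldType) :
  [/\ is_scheme R (MCI R), marginal_prop R (MCI R), elimination_prop R (MCI R),
      minimal_prop R (MCI R) &
      forall J : Scheme R,
        is_scheme R J -> marginal_prop R J -> elimination_prop R J -> minimal_prop R J ->
        forall (T : finType) (nu : {set T} -> R), is_eval R T nu ->
          forall f : T, J T nu f = MCI R T nu f].
Proof.
have sch : is_scheme R (MCI R) by move=> T nu _ f; exact: mf_ge0.
have mar : marginal_prop R (MCI R).
  move=> T nu _ f; rewrite /MCI.
  apply: (le_trans _ (@mf_ge R _ _ (setT :\ f))).
  by rewrite /Delta setD1K ?inE.
have eli : elimination_prop R (MCI R).
  move=> T nu _ A f; rewrite /MCI; apply: mf_le; first exact: mf_ge0.
  move=> S; apply: (le_trans _ (@mf_ge R _ _ ([set val x | x in S]))).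
  by rewrite /Delta /elim_eval imsetU1.
have mini : minimal_prop R (MCI R).
  move=> J Js Jm Je T nu [nu0 nuge] f; rewrite /MCI.
  apply: mf_le; first exact: Js.
  move=> S; case: (boolP (f \in S)) => fS.
    by rewrite /Delta (setUidPr _) ?sub1set // subrr; apply: Js.
  set A := ~: (f |: S).
  have fA : f \notin A by rewrite !inE negbK eqxx.
  pose f' := (exist _ f fA : elim_set T A).
  apply: (le_trans _ (Je T nu (conj nu0 nuge) A f')).
  have ev : is_eval R (elim_set T A) (@elim_eval R T A nu).
    by split; rewrite /elim_eval ?imset0.
  apply: (le_trans _ (Jm _ _ ev f')).
  rewrite /elim_eval imset_full imset_minus /= /A setCK setU1K //.
split => // J Js Jm Je Jmin T nu ev f.
apply: le_anti; rewrite mini // andbT.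
exact: Jmin.
Qed.
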